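(* If a Banach space $Z$ admits a uniform embedding into $L_2$, then $Z$ (with its norm metric) is $\Lambda$-nontrivial.
   Context: A uniform embedding is an invertible map $f$ such that $f$ and $f^{-1}$ are uniformly continuous. A map $f:X\to L_2$ is $\tau$-thresholding if $d(x,y)\ge\tau$ implies $\|f(x)-f(y)\|_2\ge\tau$. Define $\Lambda_\tau(X,\varepsilon)=\inf\big\{\sup_{x,y\in X,\ d(x,y)\ge\varepsilon\tau}\frac{\varepsilon\|f(x)-f(y)\|_2}{d(x,y)}: f:X\to L_2\text{ is }\tau\text{-thresholding}\big\}$ and $\Lambda(X,\varepsilon)=\sup_{\tau>0}\Lambda_\tau(X,\varepsilon)$. $(X,d)$ is $\Lambda$-nontrivial if $\liminf_{\varepsilon\to0}\Lambda(X,\varepsilon)=0$. *)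

(* Defs.v *)
From Stdlib Require Import Reals ClassicalEpsilon.
Open Scope R_scope.

Record NormedSpace := {
  ns_car :> Type;
  ns_zero : ns_car;
  ns_add : ns_car -> ns_car -> ns_car;
  ns_opp : ns_car -> ns_car;
  ns_scal : R -> ns_car -> ns_car;
  ns_norm : ns_car -> R;
  ns_addA : forall x y z, ns_add x (ns_add y z) = ns_add (ns_add x y) z;
  ns_addC : forall x y, ns_add x y = ns_add y x;
  ns_add0 : forall x, ns_add x ns_zero = x;
  ns_addN : forall x, ns_add x (ns_opp x) = ns_zero;
  ns_scal1 : forall x, ns_scal 1 x = x;
  ns_scalA : forall a b x, ns_scal a (ns_scal b x) = ns_scal (a * b) x;
  ns_scalDr : forall a x y, ns_scal a (ns_add x y) = ns_add (ns_scal a x) (ns_scal a y);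
  ns_scalDl : forall a b x, ns_scal (a + b) x = ns_add (ns_scal a x) (ns_scal b x);
  ns_norm_eq0 : forall x, ns_norm x = 0 -> x = ns_zero;
  ns_norm_scal : forall a x, ns_norm (ns_scal a x) = Rabs a * ns_norm x;
  ns_norm_triangle : forall x y, ns_norm (ns_add x y) <= ns_norm x + ns_norm y
}.

Definition ns_dist (Z : NormedSpace) (x y : Z) : R :=
  ns_norm Z (ns_add Z x (ns_opp Z y)).

Definition complete (Z : NormedSpace) : Prop :=
  forall u : nat -> Z,
    (forall e, 0 < e -> exists N : nat, forall m n : nat,
        (N <= m)%nat -> (N <= n)%nat -> ns_dist Z (u m) (u n) < e) ->
    exists l : Z, forall e, 0 < e -> exists N : nat, forall n : nat,
        (N <= n)%nat -> ns_dist Z (u n) l < e.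

(** * The Hilbert space L_2, realised as l_2 (isometric to L_2[0,1]). *)
Definition square_summable (a : nat -> R) : Prop :=
  exists s, infinite_sum (fun n => (a n) ^ 2) s.

Definition L2 : Type := { a : nat -> R | square_summable a }.

(** sum_n a_n^2 (the chosen limit; meaningful for square-summable a). *)
Definition sumsq (a : nat -> R) : R :=
  epsilon (inhabits 0) (fun s => infinite_sum (fun n => (a n) ^ 2) s).

Definition L2_dist (u v : L2) : R :=
  sqrt (sumsq (fun n => proj1_sig u n - proj1_sig v n)).

Definition uniformly_embeds_into_L2 (X : Type) (d : X -> X -> R) : Prop :=
  exists f : X -> L2,
    (forall x y, f x = f y -> x = y) /\
    (forall e, 0 < e -> exists del, 0 < del /\
        forall x y, d x y < del -> L2_dist (f x) (f y) < e) /\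
    (forall e, 0 < e -> exists del, 0 < del /\
        forall x y, L2_dist (f x) (f y) < del -> d x y < e).

Definition thresholding (X : Type) (d : X -> X -> R) (tau : R) (f : X -> L2) : Prop :=
  forall x y, d x y >= tau -> L2_dist (f x) (f y) >= tau.

(** Lambda_tau(X, eps) <= c, i.e.
    inf { sup_{d(x,y) >= eps*tau} eps ||f x - f y|| / d(x,y) : f tau-thresholding } <= c. *)
Definition Lambda_tau_le (X : Type) (d : X -> X -> R) (eps tau c : R) : Prop :=
  forall eta, 0 < eta -> exists f : X -> L2, thresholding X d tau f /\
    forall x y, d x y >= eps * tau ->
      eps * L2_dist (f x) (f y) / d x y <= c + eta.

Definition Lambda_le (X : Type) (d : X -> X -> R) (eps c : R) : Prop :=
  forall tau, 0 < tau -> Lambda_tau_le X d eps tau c.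

(** (X,d) is Lambda-nontrivial: liminf_{eps -> 0+} Lambda(X, eps) = 0.
    Since Lambda >= 0 (when X has two points), this amounts to:
    for every delta > 0 and eps0 > 0 there is eps in (0, eps0) with
    Lambda(X, eps) <= delta. *)
Definition Lambda_nontrivial (X : Type) (d : X -> X -> R) : Prop :=
  forall delta eps0, 0 < delta -> 0 < eps0 ->
    exists eps, 0 < eps /\ eps < eps0 /\ Lambda_le X d eps delta.

(* Main.v *)
Require Import Defs.
From Stdlib Require Import Reals Lra Lia Psatz ZArith ClassicalEpsilon.
Open Scope R_scope.

Lemma is_ext (f g : nat -> R) l : (forall n, f n = g n) -> infinite_sum f l -> infinite_sum g l.
Proof.
  intros E H e He. destruct (H e He) as [N HN]. exists N. intros n Hn.
  rewrite <- (sum_eq f g n) by (intros; apply E). now apply HN.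
Qed.

Lemma is_ext2 (f g : nat -> R) l : infinite_sum f l -> (forall n, f n = g n) -> infinite_sum g l.
Proof. intros; eapply is_ext; eauto. Qed.

Lemma sumsq_spec a s : infinite_sum (fun n => a n ^ 2) s -> sumsq a = s.
Proof.
  intros H. unfold sumsq.
  assert (H' : infinite_sum (fun n => a n ^ 2)
     (epsilon (inhabits 0) (fun s => infinite_sum (fun n => (a n) ^ 2) s))).
  { apply epsilon_spec. now exists s. }
  eapply uniqueness_sum; eauto.
Qed.

Lemma is_scal (f : nat -> R) c l : infinite_sum f l -> infinite_sum (fun n => c * f n) (c * l).
Proof.
  intros H. assert (Hc : Un_cv (fun _ : nat => c) c).
  { intros e He. exists 0%nat. intros. unfold R_dist. rewrite Rminus_diag, Rabs_R0. lra. }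
  pose proof (CV_mult _ _ _ _ Hc H) as K.
  intros e He. destruct (K e He) as [N HN]. exists N. intros n Hn.
  replace (sum_f_R0 (fun n0 => c * f n0) n) with (c * sum_f_R0 f n).
  now apply HN.
  rewrite scal_sum. apply sum_eq. intros; ring.
Qed.

Lemma ss_comb (x y z : nat -> R) A B t : 0 < t ->
  (forall n, z n = x n + y n) ->
  infinite_sum (fun n => x n ^ 2) A -> infinite_sum (fun n => y n ^ 2) B ->
  exists S, infinite_sum (fun n => z n ^ 2) S /\ S <= (1 + t) * A + (1 + / t) * B.
Proof.
  intros Ht Ez HA HB.
  pose proof (is_scal _ (1+t) _ HA) as HA'.
  pose proof (is_scal _ (1+/t) _ HB) as HB'.
  pose proof (CV_plus _ _ _ _ HA' HB') as HC.
  set (Bn := fun n => (1+t) * x n ^ 2 + (1 + /t) * y n ^2).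
  assert (HBn : Un_cv (fun N => sum_f_R0 Bn N) ((1 + t) * A + (1 + / t) * B)).
  { intros e He. destruct (HC e He) as [N HN]. exists N. intros n Hn.
    unfold Bn. rewrite plus_sum. now apply HN. }
  assert (Hpt : forall n, 0 <= z n ^ 2 <= Bn n).
  { intros n. unfold Bn. rewrite Ez. split. apply pow2_ge_0.
    assert (0 < /t) by (apply Rinv_0_lt_compat; lra).
    assert (t * /t = 1) by (field; lra).
    set (a := x n) in *. set (b := y n) in *.
    assert (0 <= (t * a - b)^2 * /t) by (apply Rmult_le_pos; [apply pow2_ge_0|lra]).
    assert (E : (1 + t) * a ^ 2 + (1 + / t) * b ^ 2 - (a+b)^2 = (t*a - b)^2 * /t)
      by (field; lra). lra. }
  destruct (Rseries_CV_comp _ _ Hpt (exist _ _ HBn)) as [S HS].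
  exists S. split. exact HS.
  eapply Rle_cv_lim; [| exact HS | exact HBn].
  intros n. apply sum_Rle. intros. apply Hpt.
Qed.

Lemma sq_tri S A B : 0 <= A -> 0 <= B ->
  (forall t, 0 < t -> S <= (1 + t) * A + (1 + / t) * B) -> sqrt S <= sqrt A + sqrt B.
Proof.
  intros HA HB H.
  assert (HS : S <= (sqrt A + sqrt B) ^ 2).
  { pose proof (sqrt_sqrt A HA). pose proof (sqrt_sqrt B HB).
    pose proof (sqrt_pos A). pose proof (sqrt_pos B).
    destruct (Req_dec A 0) as [A0|A0].
    - subst A. rewrite sqrt_0. destruct (Rle_lt_dec S B) as [|Hlt]. nra.
      exfalso. set (t := 2 * B / (S - B) + 1).
      assert (Ht : 0 < t). { unfold t. assert (0 <= 2*B/(S-B)).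
        apply Rmult_le_pos. lra. left; apply Rinv_0_lt_compat; lra. lra. }
      specialize (H t Ht). assert (t * (S - B) = 2 * B + (S - B)) by (unfold t; field; lra).
      assert (S * t <= B * t + B).
      { replace (B*t + B) with (((1 + t) * 0 + (1 + / t) * B) * t) by (field; lra).
        apply Rmult_le_compat_r; lra. }
      nra.
    - destruct (Req_dec B 0) as [B0|B0].
      + subst B. rewrite sqrt_0. destruct (Rle_lt_dec S A) as [|Hlt]. nra.
        exfalso. set (t := (S - A) / (2 * (A + 1))).
        assert (Ht : 0 < t). { unfold t. apply Rmult_lt_0_compat. lra. apply Rinv_0_lt_compat; lra. }
        specialize (H t Ht). assert (t * (2 * (A+1)) = S - A) by (unfold t; field; lra).
        nra.
      + assert (sqrt A > 0). { apply sqrt_lt_R0. lra. }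
        assert (sqrt B > 0). { apply sqrt_lt_R0. lra. }
        set (t := sqrt B / sqrt A).
        assert (Ht : 0 < t) by (unfold t; apply Rmult_lt_0_compat; [lra| apply Rinv_0_lt_compat; lra]).
        specialize (H t Ht).
        replace ((1 + t) * A + (1 + / t) * B) with ((sqrt A + sqrt B) ^ 2) in H.
        exact H.
        unfold t. assert (E : (sqrt A + sqrt B) ^ 2 = (1 + sqrt B / sqrt A) * (sqrt A * sqrt A)
           + (1 + / (sqrt B / sqrt A)) * (sqrt B * sqrt B)) by (field; lra).
        rewrite E, H0, H1. reflexivity. }
  rewrite <- (sqrt_pow2 (sqrt A + sqrt B)).
  apply sqrt_le_1_alt. lra.
  pose proof (sqrt_pos A). pose proof (sqrt_pos B). lra.
Qed.

Notation v := (@proj1_sig _ _) (only parsing).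

Lemma L2_diff_ss (u w : L2) : infinite_sum (fun n => (v u n - v w n) ^ 2) (sumsq (fun n => v u n - v w n)).
Proof.
  destruct (proj2_sig u) as [A HA]. destruct (proj2_sig w) as [B HB].
  assert (HB' : infinite_sum (fun n => (- v w n) ^ 2) B).
  { apply (is_ext2 _ _ _ HB). intros; simpl; ring. }
  destruct (ss_comb (v u) (fun n => - v w n) (fun n => v u n - v w n) A B 1 ltac:(lra)
     ltac:(intros; cbv beta; ring) HA HB') as [S [HS _]].
  rewrite (sumsq_spec _ _ HS). exact HS.
Qed.

Lemma sumsq_nonneg (u w : L2) : 0 <= sumsq (fun n => v u n - v w n).
Proof.
  pose proof (L2_diff_ss u w) as H.
  apply Rle_trans with (sum_f_R0 (fun n => (v u n - v w n) ^ 2) 0).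
  simpl. apply pow2_ge_0. apply sum_incr. exact H. intros; apply pow2_ge_0.
Qed.

Lemma L2_tri (u m w : L2) : L2_dist u w <= L2_dist u m + L2_dist m w.
Proof.
  unfold L2_dist. apply sq_tri. apply sumsq_nonneg. apply sumsq_nonneg.
  intros t Ht.
  destruct (ss_comb (fun n => v u n - v m n) (fun n => v m n - v w n) (fun n => v u n - v w n)
    _ _ t Ht ltac:(intros; cbv beta; ring) (L2_diff_ss u m) (L2_diff_ss m w)) as [S [HS HSle]].
  rewrite (sumsq_spec _ _ HS). exact HSle.
Qed.

Lemma L2_dist_nonneg u w : 0 <= L2_dist u w.
Proof. apply sqrt_pos. Qed.

Definition L2scal (c : R) (u : L2) : L2.
Proof.
  exists (fun n => c * v u n).
  destruct (proj2_sig u) as [A HA]. exists (c^2 * A).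
  apply (is_ext2 _ _ _ (is_scal _ (c^2) _ HA)). intros; simpl; ring.
Defined.

Lemma L2scal_dist c u w : 0 < c -> L2_dist (L2scal c u) (L2scal c w) = c * L2_dist u w.
Proof.
  intros Hc. unfold L2_dist. simpl.
  pose proof (is_scal _ (c^2) _ (L2_diff_ss u w)) as H.
  rewrite (sumsq_spec (fun n => c * v u n - c * v w n) (c ^ 2 * sumsq (fun n => v u n - v w n))).
  - rewrite sqrt_mult. rewrite sqrt_pow2 by lra. reflexivity. nra. apply sumsq_nonneg.
  - apply (is_ext2 _ _ _ H). intros; simpl; ring.
Qed.

Section Z.
Variable Z : NormedSpace.
Notation add := (ns_add Z). Notation sc := (ns_scal Z). Notation opp := (ns_opp Z).
Notation zero := (ns_zero Z). Notation nrm := (ns_norm Z).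

Lemma Rabs_m1 : Rabs (-1) = 1.
Proof. unfold Rabs; destruct (Rcase_abs (-1)); lra. Qed.

Lemma add0l x : add zero x = x.
Proof. rewrite ns_addC; apply ns_add0. Qed.

Lemma scal0 x : sc 0 x = zero.
Proof.
  assert (E : sc 0 x = add (sc 0 x) (sc 0 x)) by (rewrite <- ns_scalDl; f_equal; ring).
  transitivity (add (sc 0 x) (add (sc 0 x) (opp (sc 0 x)))).
  rewrite ns_addN, ns_add0; reflexivity. rewrite ns_addA, <- E. apply ns_addN.
Qed.

Lemma opp_scal x : opp x = sc (-1) x.
Proof.
  assert (E : add (sc (-1) x) x = zero).
  { rewrite <- (ns_scal1 Z x) at 2. rewrite <- ns_scalDl.
    replace (-1 + 1) with 0 by ring. apply scal0. }
  rewrite <- (add0l (opp x)), <- E, <- ns_addA, ns_addN, ns_add0. reflexivity.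
Qed.

Lemma swap4 p q r s : add (add p q) (add r s) = add (add p r) (add q s).
Proof.
  rewrite <- !ns_addA. f_equal. rewrite !ns_addA. f_equal. apply ns_addC.
Qed.

Lemma norm_nonneg x : 0 <= nrm x.
Proof.
  assert (H0 : nrm zero = 0). { rewrite <- (scal0 x), ns_norm_scal. rewrite Rabs_R0. ring. }
  pose proof (ns_norm_triangle Z x (sc (-1) x)) as H.
  rewrite (ns_norm_scal Z (-1) x) in H. rewrite <- opp_scal, ns_addN, H0 in H.
  replace (Rabs (-1)) with 1 in H. lra. rewrite Rabs_m1. reflexivity.
Qed.

Lemma dist_scal b x y : ns_dist Z (sc b x) (sc b y) = Rabs b * ns_dist Z x y.
Proof.
  unfold ns_dist. rewrite <- ns_norm_scal. f_equal.
  rewrite !opp_scal, ns_scalDr, !ns_scalA. f_equal; f_equal; ring.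
Qed.

Lemma dist_sym x y : ns_dist Z x y = ns_dist Z y x.
Proof.
  unfold ns_dist. replace (add y (opp x)) with (sc (-1) (add x (opp y))).
  rewrite ns_norm_scal, Rabs_m1. ring.
  rewrite !opp_scal, ns_scalDr, ns_scalA. replace (-1 * -1) with 1 by ring.
  rewrite ns_scal1. apply ns_addC.
Qed.

Lemma seg_diff x w a c :
  add (add x (sc a w)) (opp (add x (sc c w))) = sc (a - c) w.
Proof.
  rewrite opp_scal, ns_scalDr, ns_scalA, swap4, <- opp_scal, ns_addN, add0l.
  rewrite <- ns_scalDl. f_equal; ring.
Qed.

Lemma seg_end x y : add x (sc 1 (add y (opp x))) = y.
Proof.
  rewrite ns_scal1, ns_addA, (ns_addC Z x y), <- ns_addA, ns_addN, ns_add0. reflexivity.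
Qed.

Lemma seg_start x w : add x (sc 0 w) = x.
Proof. rewrite scal0, ns_add0. reflexivity. Qed.
End Z.

Lemma chain (G : nat -> L2) e n : (forall k, (k < n)%nat -> L2_dist (G k) (G (S k)) <= e) ->
  forall m, (S m <= n)%nat -> L2_dist (G 0%nat) (G (S m)) <= INR (S m) * e.
Proof.
  intros H m. induction m as [|m IH]; intros Hm.
  - simpl. rewrite Rmult_1_l. apply H. lia.
  - eapply Rle_trans. apply (L2_tri _ (G (S m))).
    rewrite S_INR, Rmult_plus_distr_r, Rmult_1_l.
    apply Rplus_le_compat. apply IH; lia. apply H; lia.
Qed.

Lemma dist_self (Z : NormedSpace) (x : Z) : ns_dist Z x x = 0.
Proof.
  unfold ns_dist. rewrite ns_addN, <- (scal0 Z x), ns_norm_scal, Rabs_R0. ring.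
Qed.

Lemma upper (Z : NormedSpace) (F : Z -> L2) e d1 : 0 < d1 ->
  (forall x y, ns_dist Z x y < d1 -> L2_dist (F x) (F y) < e) ->
  forall x y, L2_dist (F x) (F y) <= e * (ns_dist Z x y / d1 + 1).
Proof.
  intros Hd1 HF x y.
  assert (He : 0 <= e).
  { pose proof (HF x x ltac:(rewrite dist_self; lra)). pose proof (L2_dist_nonneg (F x) (F x)). lra. }
  set (D := ns_dist Z x y).
  assert (HD : 0 <= D) by apply norm_nonneg.
  set (r := D / d1).
  assert (Hr : 0 <= r) by (unfold r; apply Rmult_le_pos; [lra | left; apply Rinv_0_lt_compat; lra]).
  destruct (archimed r) as [A1 A2].
  assert (Hz : (0 < up r)%Z) by (apply lt_0_IZR; lra).
  set (n := Z.to_nat (up r)).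
  assert (Hn : INR n = IZR (up r)).
  { unfold n. rewrite INR_IZR_INZ, Z2Nat.id by lia. reflexivity. }
  assert (Hn0 : (0 < n)%nat) by (unfold n; lia).
  assert (HnR : 0 < INR n) by (apply lt_0_INR; lia).
  set (w := ns_add Z y (ns_opp Z x)).
  set (G := fun k => F (ns_add Z x (ns_scal Z (INR k / INR n) w))).
  assert (Hstep : forall k, (k < n)%nat -> L2_dist (G k) (G (S k)) <= e).
  { intros k _. left. unfold G. apply HF. unfold ns_dist. rewrite seg_diff, ns_norm_scal.
    replace (INR k / INR n - INR (S k) / INR n) with (- / INR n) by (rewrite S_INR; field; lra).
    rewrite Rabs_Ropp, Rabs_right by (left; apply Rinv_0_lt_compat; lra).
    replace (ns_norm Z w) with D by (unfold w, D; rewrite (dist_sym Z x y); reflexivity).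
    assert (D < INR n * d1).
    { assert (Erd : r * d1 = D) by (unfold r; field; lra). rewrite Hn. nra. }
    apply (Rmult_lt_reg_l (INR n)); [lra|]. rewrite <- Rmult_assoc, Rinv_r, Rmult_1_l; lra. }
  assert (Em : exists m, n = S m) by (exists (pred n); lia). destruct Em as [m Em].
  pose proof (chain G e n Hstep m ltac:(lia)) as Hc. rewrite <- Em in Hc.
  unfold G in Hc.
  replace (INR 0 / INR n) with 0 in Hc by (unfold Rdiv; rewrite INR_0; ring).
  replace (INR n / INR n) with 1 in Hc by (field; lra).
  unfold w in Hc. rewrite seg_start, seg_end in Hc.
  eapply Rle_trans. exact Hc. rewrite Rmult_comm. apply Rmult_le_compat_l. lra.
  fold r. lra.
Qed.

Theorem lemma5p7 (Z : NormedSpace) :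
  complete Z ->
  uniformly_embeds_into_L2 (ns_car Z) (ns_dist Z) ->
  Lambda_nontrivial (ns_car Z) (ns_dist Z).
Proof.
  intros _ [F [_ [H1 H2]]] delta eps0 Hdel Heps0.
  destruct (H2 1 ltac:(lra)) as [d2 [Hd2 Hinv]].
  set (e' := delta * d2 / 2).
  assert (He' : 0 < e') by (unfold e'; nra).
  destruct (H1 e' He') as [d1 [Hd1 Hfw]].
  pose proof (upper Z F e' d1 Hd1 Hfw) as U.
  exists (Rmin (eps0 / 2) d1).
  assert (Hm1 : Rmin (eps0/2) d1 <= eps0/2) by apply Rmin_l.
  assert (Hm2 : Rmin (eps0/2) d1 <= d1) by apply Rmin_r.
  assert (Hm0 : 0 < Rmin (eps0/2) d1) by (apply Rmin_glb_lt; lra).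
  set (eps := Rmin (eps0/2) d1) in *.
  split; [lra|]. split; [lra|].
  intros tau Htau eta Heta.
  exists (fun x => L2scal (tau / d2) (F (ns_scal Z (/ tau) x))).
  assert (Ha : 0 < tau / d2) by (apply Rmult_lt_0_compat; [lra| apply Rinv_0_lt_compat; lra]).
  assert (Hb : 0 < / tau) by (apply Rinv_0_lt_compat; lra).
  assert (Hdb : forall x y, ns_dist Z (ns_scal Z (/tau) x) (ns_scal Z (/tau) y) = ns_dist Z x y / tau).
  { intros. rewrite dist_scal, Rabs_right by lra. unfold Rdiv. ring. }
  split.
  - intros x y Hxy. rewrite L2scal_dist by lra.
    destruct (Rlt_le_dec (L2_dist (F (ns_scal Z (/ tau) x)) (F (ns_scal Z (/ tau) y))) d2) as [Hl|Hl].
    + exfalso. pose proof (Hinv _ _ Hl) as K. rewrite Hdb in K.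
      assert (ns_dist Z x y < tau).
      { apply (Rmult_lt_reg_r (/tau)); [lra|]. rewrite Rinv_r by lra. exact K. }
      lra.
    + apply Rle_ge. replace tau with (tau / d2 * d2) at 1 by (field; lra).
      apply Rmult_le_compat_l; lra.
  - intros x y Hxy. rewrite L2scal_dist by lra.
    set (D := ns_dist Z x y) in *.
    set (L := L2_dist (F (ns_scal Z (/ tau) x)) (F (ns_scal Z (/ tau) y))).
    assert (HL : L <= e' * (D / tau / d1 + 1)) by (unfold L, D; rewrite <- Hdb; apply U).
    assert (HD : 0 < D) by nra.
    assert (HL0 : 0 <= L) by apply L2_dist_nonneg.
    assert (Key : eps * (tau / d2 * L) <= delta * D).
    { apply Rle_trans with (eps * (tau / d2) * (e' * (D / tau / d1 + 1))).
      - rewrite <- Rmult_assoc. apply Rmult_le_compat_l; [|exact HL].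
        apply Rmult_le_pos; lra.
      - replace (eps * (tau / d2) * (e' * (D / tau / d1 + 1)))
          with (delta / 2 * (eps * D / d1 + eps * tau)) by (unfold e'; field; lra).
        assert (eps * D / d1 <= D).
        { apply (Rmult_le_reg_r d1); [lra|]. replace (eps * D / d1 * d1) with (eps * D) by (field; lra).
          nra. }
        nra. }
    apply Rle_trans with delta; [|lra].
    unfold Rdiv at 1. apply (Rmult_le_reg_r D); [lra|].
    replace (eps * (tau / d2 * L) * / D * D) with (eps * (tau / d2 * L)) by (field; lra).
    exact Key.
Qed.
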